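(* Consider the problem of minimizing $\Phi(x_1,x_2):=\theta_1(x_1)+h(x_1,x_2)+\theta_2(x_2)$ with $h=h^+-h^-$, and let $\{(x_1^k,x_2^k)\}_{k\in\mathbb{N}}$ be a sequence generated by the inertial Bregman alternating linearized minimization algorithm described in the context, under Assumptions A1, A2 and A3 stated in the context (with the constants $\varepsilon,\delta_1,\delta_2$ defined there). Set $w_1^k=(x_1^k,x_2^k)$, $w_2^k=(x_1^{k-1},x_2^{k-1})$ and $\mathbf{w}^k=(w_1^k,w_2^k)$. Then the sequence $\{\Theta_{\delta_1,\delta_2}(\mathbf{w}^k)\}_{k\in\mathbb{N}}$ is nonincreasing; in particular, for all $k\in\mathbb{N}$, $$\Theta_{\delta_1,\delta_2}(\mathbf{w}^{k+1})-\Theta_{\delta_1,\delta_2}(\mathbf{w}^k)\le -\delta\,\|\mathbf{w}^{k+1}-\mathbf{w}^k\|^2,$$ where $\delta=\frac{\varepsilon}{2}\min\{\delta_1,\delta_2\}>0$.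
   Context: Let $n_1,n_2\ge 1$. Let $\theta_1:\mathbb{R}^{n_1}\to(-\infty,+\infty]$, $\theta_2:\mathbb{R}^{n_2}\to(-\infty,+\infty]$, and let $h^+,h^-:\mathbb{R}^{n_1}\times\mathbb{R}^{n_2}\to\mathbb{R}$ be continuously differentiable, $h=h^+-h^-$, $\Phi(x_1,x_2)=\theta_1(x_1)+h(x_1,x_2)+\theta_2(x_2)$. Bregman distance: for a strongly convex, continuously differentiable $\psi$, $D_\psi(x,y)=\psi(x)-\psi(y)-\langle\nabla\psi(y),x-y\rangle$. For a function $g$, $\mu>0$ and a kernel $\psi$, define $\mathcal{P}^{\psi}_{g,\mu}(u;v):=\arg\min_x\{g(x)+\langle x,v\rangle+\mu D_\psi(x,u)\}$. For each $k\in\mathbb{N}$, $\psi_k:\mathbb{R}^{n_1}\to\mathbb{R}$ and $\varphi_k:\mathbb{R}^{n_2}\to\mathbb{R}$ are strongly convex continuously differentiable kernels whose strong convexity moduli are at least $\rho_1>0$ and $\rho_2>0$ respectively (over all $k$). Algorithm: choose parameters $\alpha_i^k,\beta_i^k,\tau_i^k$ ($i=1,2$), an initial point $x^0=(x_1^0,x_2^0)$, and set $x^{-1}:=x^0$. For $k=0,1,2,\dots$: $y_1^k=x_1^k+\alpha_1^k(x_1^k-x_1^{k-1})$, $z_1^k=x_1^k+\beta_1^k(x_1^k-x_1^{k-1})$, $x_1^{k+1}\in\mathcal{P}^{\psi_k}_{\theta_1+h^+(\cdot,x_2^k),\tau_1^k}(x_1^k;t_1^k)$ with $t_1^k=-\nabla_{x_1}h^-(z_1^k,x_2^k)-\tau_1^k(y_1^k-x_1^k)$;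 $y_2^k=x_2^k+\alpha_2^k(x_2^k-x_2^{k-1})$, $z_2^k=x_2^k+\beta_2^k(x_2^k-x_2^{k-1})$, $x_2^{k+1}\in\mathcal{P}^{\varphi_k}_{\theta_2+h^+(x_1^{k+1},\cdot),\tau_2^k}(x_2^k;t_2^k)$ with $t_2^k=-\nabla_{x_2}h^-(x_1^{k+1},z_2^k)-\tau_2^k(y_2^k-x_2^k)$. Assumption A1: $\theta_1,\theta_2$ are proper lower semicontinuous, and $\Phi$ is bounded from below. Assumption A2: (i) for every fixed $x_2$, $\nabla_{x_1}h^-(\cdot,x_2)$ is globally Lipschitz with modulus $L_1^-(x_2)$; for every fixed $x_1$, $\nabla_{x_2}h^-(x_1,\cdot)$ is globally Lipschitz with modulus $L_2^-(x_1)$. (ii) There exist $\lambda_i^-,\lambda_i^+>0$ ($i=1,2$) with $\inf_k L_1^-(x_2^k)\ge\lambda_1^-$, $\inf_k L_2^-(x_1^k)\ge\lambda_2^-$, $\sup_k L_1^-(x_2^k)\le\lambda_1^+$, $\sup_k L_2^-(x_1^k)\le\lambda_2^+$. (iii) $h$ is continuously differentiable and $\nabla h=\nabla h^+-\nabla h^-$ is Lipschitz continuous on bounded subsets of $\mathbb{R}^{n_1}\times\mathbb{R}^{n_2}$. Assumption A3: for a fixed $\varepsilon>0$: (i) there exist $0<\bar\alpha_i<\frac{(1-\varepsilon)\rho_i}{2}$ with $\alpha_i^k\in[0,\bar\alpha_i]$, and $\bar\beta_i>0$ with $\beta_i^k\in[0,\bar\beta_i]$, $i=1,2$, for all $k$;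 (ii) $\tau_1^k=\frac{(1+\varepsilon)\delta_1+(1+\beta_1^k)L_1^-(x_2^k)}{\rho_1-\alpha_1^k}$, $\tau_2^k=\frac{(1+\varepsilon)\delta_2+(1+\beta_2^k)L_2^-(x_1^{k+1})}{\rho_2-\alpha_2^k}$, where $\delta_1=\frac{\bar\alpha_1+\bar\beta_1\rho_1}{(1-\varepsilon)\rho_1-2\bar\alpha_1}\lambda_1^+$ and $\delta_2=\frac{\bar\alpha_2+\bar\beta_2\rho_2}{(1-\varepsilon)\rho_2-2\bar\alpha_2}\lambda_2^+$. Auxiliary function: for $\mathbf{w}=(w_1,w_2)$ with $w_1=(w_{11},w_{12}),w_2=(w_{21},w_{22})\in\mathbb{R}^{n_1}\times\mathbb{R}^{n_2}$, $\Theta_{\delta_1,\delta_2}(\mathbf{w}):=\Phi(w_1)+\frac{\delta_1}{2}\|w_{11}-w_{21}\|^2+\frac{\delta_2}{2}\|w_{12}-w_{22}\|^2$. *)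

(* Defs.v *)
From HB Require Import structures.
From mathcomp Require Import all_boot all_order all_algebra.
From mathcomp Require Import all_classical all_reals all_analysis.
Set Implicit Arguments. Unset Strict Implicit. Unset Printing Implicit Defensive.
Import Order.TTheory GRing.Theory Num.Theory.
Import numFieldNormedType.Exports.
Local Open Scope ring_scope.

Section Defs.
Variable R : realType.

Definition dotv n (u v : 'rV[R]_n) : R := \sum_(i < n) u 0 i * v 0 i.
Definition sqn n (u : 'rV[R]_n) : R := dotv u u.
Definition enorm n (u : 'rV[R]_n) : R := Num.sqrt (sqn u).

Definition is_gradient n (f : 'rV[R]_n -> R) (g : 'rV[R]_n -> 'rV[R]_n) :=
  forall x, differentiable f x /\ forall v, 'D_v f x = dotv (g x) v.

Definition C1_grad n (f : 'rV[R]_n -> R) (g : 'rV[R]_n -> 'rV[R]_n) :=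
  is_gradient f g /\ continuous g.

Definition is_gradient2 n1 n2 (h : 'rV[R]_n1 -> 'rV[R]_n2 -> R)
  (g1 : 'rV[R]_n1 -> 'rV[R]_n2 -> 'rV[R]_n1)
  (g2 : 'rV[R]_n1 -> 'rV[R]_n2 -> 'rV[R]_n2) :=
  forall p : 'rV[R]_n1 * 'rV[R]_n2,
    differentiable (fun q : 'rV[R]_n1 * 'rV[R]_n2 => h q.1 q.2) p /\
    forall v : 'rV[R]_n1 * 'rV[R]_n2,
      'D_v (fun q : 'rV[R]_n1 * 'rV[R]_n2 => h q.1 q.2) p
        = dotv (g1 p.1 p.2) v.1 + dotv (g2 p.1 p.2) v.2.

Definition C1_grad2 n1 n2 (h : 'rV[R]_n1 -> 'rV[R]_n2 -> R) g1 g2 :=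
  @is_gradient2 n1 n2 h g1 g2 /\
  continuous (fun p : 'rV[R]_n1 * 'rV[R]_n2 => (g1 p.1 p.2, g2 p.1 p.2)).

Definition strongly_convex n (s : R) (psi : 'rV[R]_n -> R) :=
  forall (x y : 'rV[R]_n) (l : R), 0 <= l <= 1 ->
    psi (l *: x + (1 - l) *: y)
      <= l * psi x + (1 - l) * psi y - s / 2 * l * (1 - l) * sqn (x - y).

Definition bregman n (psi : 'rV[R]_n -> R) (dpsi : 'rV[R]_n -> 'rV[R]_n)
  (x y : 'rV[R]_n) : R :=
  psi x - psi y - dotv (dpsi y) (x - y).

Definition is_argmin n (F : 'rV[R]_n -> \bar R) (x : 'rV[R]_n) :=
  forall y, (F x <= F y)%E.

Definition proper_fun n (f : 'rV[R]_n -> \bar R) :=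
  (forall x, f x != -oo%E) /\ exists x, f x \is a fin_num.

Definition Phi n1 n2 (theta1 : 'rV[R]_n1 -> \bar R) (theta2 : 'rV[R]_n2 -> \bar R)
  (h : 'rV[R]_n1 -> 'rV[R]_n2 -> R) (x1 : 'rV[R]_n1) (x2 : 'rV[R]_n2) : \bar R :=
  (theta1 x1 + (h x1 x2)%:E + theta2 x2)%E.

(* Theta_{d1,d2}(w) with w = ((w11,w12),(w21,w22)) *)
Definition Theta n1 n2 theta1 theta2 h (d1 d2 : R)
  (w11 : 'rV[R]_n1) (w12 : 'rV[R]_n2) (w21 : 'rV[R]_n1) (w22 : 'rV[R]_n2) : \bar R :=
  (@Phi n1 n2 theta1 theta2 h w11 w12
    + (d1 / 2 * sqn (w11 - w21) + d2 / 2 * sqn (w12 - w22))%:E)%E.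

Definition delta_const (eps abar bbar rho lam : R) : R :=
  (abar + bbar * rho) / ((1 - eps) * rho - 2 * abar) * lam.

End Defs.

(* Main.v *)
Require Import Defs.
From HB Require Import structures.
From mathcomp Require Import all_boot all_order all_algebra.
From mathcomp Require Import all_classical all_reals all_analysis.
From mathcomp Require Import ring lra.
Import Order.TTheory GRing.Theory Num.Theory.
Import numFieldNormedType.Exports.
Local Open Scope ring_scope.
Local Open Scope classical_set_scope.
Local Open Scope ring_scope.

Section Dot.
Variables (R : realType) (n : nat).
Implicit Types u v w : 'rV[R]_n.

Lemma dotvC u v : dotv u v = dotv v u.
Proof. by rewrite /dotv; apply: eq_bigr => i _; rewrite mulrC. Qed.

Lemma dotvDl u v w : dotv (u + v) w = dotv u w + dotv v w.
Proof. by rewrite /dotv -big_split; apply: eq_bigr => i _; rewrite mxE mulrDl. Qed.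

Lemma dotvZl a u w : dotv (a *: u) w = a * dotv u w.
Proof. by rewrite /dotv mulr_sumr; apply: eq_bigr => i _; rewrite mxE mulrA. Qed.

Lemma dotvNl u w : dotv (- u) w = - dotv u w.
Proof. by rewrite -scaleN1r dotvZl mulN1r. Qed.

Lemma dotvBl u v w : dotv (u - v) w = dotv u w - dotv v w.
Proof. by rewrite dotvDl dotvNl. Qed.

Lemma dotvDr u v w : dotv w (u + v) = dotv w u + dotv w v.
Proof. by rewrite dotvC dotvDl !(dotvC w). Qed.
Lemma dotvZr a u w : dotv w (a *: u) = a * dotv w u.
Proof. by rewrite dotvC dotvZl dotvC. Qed.
Lemma dotvNr u w : dotv w (- u) = - dotv w u.
Proof. by rewrite dotvC dotvNl dotvC. Qed.
Lemma dotvBr u v w : dotv w (u - v) = dotv w u - dotv w v.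
Proof. by rewrite dotvDr dotvNr. Qed.
Lemma dotv0r u : dotv u 0 = 0.
Proof. by rewrite /dotv big1 // => i _; rewrite mxE mulr0. Qed.

Lemma sqnv_ge0 u : 0 <= sqn u.
Proof. by rewrite /sqn /dotv sumr_ge0 // => i _; rewrite -expr2 sqr_ge0. Qed.

Lemma sqnvB u v : sqn (u - v) = sqn u - 2 * dotv u v + sqn v.
Proof. rewrite /sqn dotvBl !dotvBr (dotvC v u); lra. Qed.

Lemma sqnv_le0 u : sqn u <= 0 -> u = 0.
Proof.
move=> h; have h0 : sqn u = 0 by apply/eqP; rewrite eq_le h sqnv_ge0.
apply/rowP => i; rewrite mxE.
move: h0; rewrite /sqn /dotv => /eqP; rewrite psumr_eq0 => [/allP /(_ i)|j _].
  by rewrite mem_index_enum => /(_ isT) /implyP /(_ isT); rewrite mulf_eq0 orbb => /eqP.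
by rewrite -expr2 sqr_ge0.
Qed.

Lemma key_cs (d D e : 'rV[R]_n) m : 0 <= m -> sqn D <= m ^+ 2 * sqn e ->
  2 * dotv d D <= m * (sqn d + sqn e).
Proof.
move=> m0 hD; have [m00|mpos] := eqVneq m 0; first subst m.
  have D0 : D = 0 by apply: sqnv_le0; move: hD; rewrite expr0n mul0r.
  rewrite D0 dotv0r; lra.
have mgt0 : 0 < m by rewrite lt_def mpos m0.
have := sqnv_ge0 (m *: d - D); rewrite sqnvB /sqn dotvZl dotvZr dotvZl -/(sqn d) -/(sqn D) => h.
have h2 : m * (2 * dotv d D) <= m * (m * (sqn d + sqn e)).
  rewrite /sqn in h hD |- *; rewrite expr2 in hD; lra.
by rewrite ler_pM2l in h2.
Qed.

Lemma enorm_sq (a b : 'rV[R]_n) c : 0 <= c -> enorm a <= c * enorm b ->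
  sqn a <= c ^+ 2 * sqn b.
Proof.
move=> c0 h; rewrite /enorm in h.
have e1 := sqr_sqrtr (sqnv_ge0 a); have e2 := sqr_sqrtr (sqnv_ge0 b).
rewrite -e1 -e2 -exprMn; apply: lerXn2r => //; rewrite ?nnegrE ?sqrtr_ge0 //.
by rewrite mulr_ge0 // sqrtr_ge0.
Qed.

End Dot.
Lemma t1 (R : realType) (F : R -> R) (t dF c k : R) :
  is_derive t (1:R) F dF ->
  is_derive t (1:R) (F - c \*: id + k \*: (id * id)) (dF - c + k * (2 * t)).
Proof.
move=> hF; apply: is_derive_eq.
change (dF - c * 1 + k * (t * 1 + t * 1) = dF - c + k * (2 * t)); lra.
Qed.

Lemma descent (R : realType) n (M : 'rV[R]_n -> R) gM L (a b : 'rV[R]_n) :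
  (forall x v, derivable M x v) -> (forall x v, 'D_v M x = dotv (gM x) v) ->
  0 <= L -> (forall u w, enorm (gM u - gM w) <= L * enorm (u - w)) ->
  M a + dotv (gM a) (b - a) - L / 2 * sqn (b - a) <= M b.
Proof.
move=> dM DM L0 Lip; set d := b - a.
set F := fun t : R => M (t *: d + a).
have HF t : is_derive t (1:R) F (dotv (gM (t *: d + a)) d).
  have E : (fun h : R => h^-1 *: ((F \o shift t) (h *: 1) - F t)) =
           (fun h => h^-1 *: ((M \o shift (t *: d + a)) (h *: d) - M (t *: d + a))).
    apply/funext => h /=; rewrite /F; congr (_ *: (M _ - _)).
    change ((h * 1 + t) *: d + a = h *: d + (t *: d + a)).
    by rewrite mulr1 scalerDl addrA.
  apply: DeriveDef; first by rewrite /derivable E; exact: dM.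
  by rewrite /derive E; exact: DM.
set c := dotv (gM a) d; set k := L / 2 * sqn d.
set g := F - c \*: id + k \*: (id * id).
have Hg t : is_derive t (1:R) g (dotv (gM (t *: d + a)) d - c + k * (2 * t)).
  exact: t1.
have mono : g 0 <= g 1.
  apply: (@ger0_derive1_ndecr R g 0 1) => //.
  - move=> x; rewrite in_itv /= => /andP[x0 x1].
    rewrite derive1E (@derive_val _ _ _ _ _ _ _ (Hg x)).
    set D := gM (x *: d + a) - gM a.
    have hD : sqn D <= L ^+ 2 * sqn (x *: d).
      apply: enorm_sq => //; have := Lip (x *: d + a) a.
      by rewrite addrK.
    have P := @key_cs R n (- (x *: d)) D (x *: d) L L0 hD.
    move: P; rewrite dotvNl dotvZl /sqn dotvNl dotvNr opprK !dotvZl !dotvZr.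
    rewrite /D dotvC dotvBl -/c /k => P.
    have Q : 0 <= x * (dotv (gM (x *: d + a)) d - c + L / 2 * dotv d d * (2 * x)).
      rewrite /sqn; lra.
    by rewrite pmulr_rge0 in Q.
  - apply: derivable_within_continuous => x _.
    exact: (@ex_derive _ _ _ _ _ _ _ (Hg x)).
move: mono; change (M (0 *: d + a) - c * 0 + k * (0 * 0) <= M (1 *: d + a) - c * 1 + k * (1 * 1) -> M a + c - k <= M b).
rewrite scale0r add0r scale1r /d subrK.
rewrite /k /c; lra.
Qed.
Lemma breg_lb (R : realType) n (psi : 'rV[R]_n -> R) dpsi s (x y : 'rV[R]_n) :
  (forall v, derivable psi y v) -> (forall v, 'D_v psi y = dotv (dpsi y) v) ->
  strongly_convex s psi -> s / 2 * sqn (x - y) <= bregman psi dpsi x y.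
Proof.
move=> dv Dv sc.
set v := x - y.
have cv : (fun h : R => h^-1 *: ((psi \o shift y) (h *: v) - psi y)) @ 0^' --> 'D_v psi y.
  exact: dv.
set q := (fun h : R => _) in cv.
have sub : (0^'+ : set_system R) `=>` (0^' : set_system R).
  move=> A; rewrite /at_right /dnbhs /within /=; apply: filterS => h H hpos.
  by apply: H; rewrite gt_eqF.
have cv' : q @ 0^'+ --> 'D_v psi y := fun A hA => sub _ (cv A hA).
set c := s / 2 * sqn v.
have c2 : (fun h : R => c * h) @ 0^'+ --> (c * 0 : R).
  apply: cvg_at_right_filter; apply: cvgM; [exact: cvg_cst | exact: cvg_id].
have c3 : (fun h => q h - c * h) @ 0^'+ --> ('D_v psi y - c * 0 : R) by apply: cvgB.
have PF := at_right_proper_filter (0 : R).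
have L := cvg_lim (@Rhausdorff R) c3.
have N : \forall h \near 0^'+, q h - c * h <= psi x - psi y - c.
  near=> h.
  have hpos : 0 < h by near: h; exact: nbhs_right_gt.
  have hle1 : h <= 1 by near: h; exact: nbhs_right_le.
  have hb : 0 <= h <= 1 by rewrite (ltW hpos) hle1.
  have P := sc x y h hb.
  have E : h *: x + (1 - h) *: y = h *: v + y.
    by rewrite /v scalerBr scalerBl scale1r addrA addrAC.
  rewrite E in P; rewrite /q /= -/v.
  set X := psi (h *: v + y) - psi y.
  have key : X <= h * (psi x - psi y - c + c * h) by rewrite /X /c; rewrite /c in P; lra.
  change (h^-1 * X - c * h <= psi x - psi y - c).
  have hi : 0 <= h^-1 by rewrite invr_ge0 ltW.
  have := ler_wpM2l hi key.
  rewrite mulrA mulVf ?gt_eqF // mul1r; lra.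
have := limr_le (cvgP _ c3) N.
rewrite L mulr0 subr0 Dv /bregman /c -/v => /(_ PF); lra.
Unshelve. all: by end_near.
Qed.
Lemma consts (R : realType) (eps abar bbar rho lam L alpha beta tau del : R) :
  0 < rho -> 0 < eps -> 0 < abar -> abar < (1 - eps) * rho / 2 -> 0 < bbar ->
  0 <= alpha <= abar -> 0 <= beta <= bbar -> 0 <= L <= lam ->
  del = delta_const eps abar bbar rho lam ->
  tau = ((1 + eps) * del + (1 + beta) * L) / (rho - alpha) ->
  [/\ 0 <= tau, 0 <= del, tau * (rho - alpha) = (1 + eps) * del + (1 + beta) * L
    & L * beta + tau * alpha <= (1 - eps) * del].
Proof.
move=> r0 e0 a0 a1 b0 /andP[al0 al1] /andP[be0 be1] /andP[L0 L1] hdel htau.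
have K0 : 0 < (1 - eps) * rho - 2 * abar by lra.
have ra : 0 < rho - alpha.
  have : (1 - eps) * rho < rho by nra.
  lra.
have dK : del * ((1 - eps) * rho - 2 * abar) = (abar + bbar * rho) * lam.
  by rewrite hdel /delta_const; field; rewrite gt_eqF.
have lam0 : 0 <= lam by lra.
have del0 : 0 <= del.
  by rewrite hdel /delta_const mulr_ge0 // divr_ge0 //; [apply: addr_ge0; [exact: ltW | apply: mulr_ge0; exact: ltW] | exact: ltW].
have T1 : tau * (rho - alpha) = (1 + eps) * del + (1 + beta) * L.
  by rewrite htau; field; rewrite gt_eqF.
have tau0 : 0 <= tau.
  rewrite htau divr_ge0 //; last exact: ltW.
  apply: addr_ge0; apply: mulr_ge0 => //; lra.
have S1 : (alpha + beta * rho) * L <= (abar + bbar * rho) * lam.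
  apply: ler_pM => //; first by nra.
  have : beta * rho <= bbar * rho by rewrite ler_pM2r.
  lra.
have S2 : del * ((1 - eps) * rho - 2 * abar) <= del * ((1 - eps) * rho - 2 * alpha).
  apply: ler_wpM2l => //; lra.
have S3 : (L * beta + tau * alpha) * (rho - alpha) <= (1 - eps) * del * (rho - alpha).
  have -> : (L * beta + tau * alpha) * (rho - alpha) =
    L * beta * (rho - alpha) + alpha * (tau * (rho - alpha)) by ring.
  rewrite T1. lra.
split => //.
by rewrite -(ler_pM2r ra).
Qed.
Lemma block (R : realType) n (P M : 'rV[R]_n -> R) (gM : 'rV[R]_n -> 'rV[R]_n)
  (ps : 'rV[R]_n -> R) dps (s rho L lam tau alpha beta eps del abar bbar : R)
  (x xm xp : 'rV[R]_n) (r p : R) :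
  (forall u v, derivable M u v) -> (forall u v, 'D_v M u = dotv (gM u) v) ->
  (forall u w, enorm (gM u - gM w) <= L * enorm (u - w)) ->
  (forall v, derivable ps x v) -> (forall v, 'D_v ps x = dotv (dps x) v) ->
  strongly_convex s ps -> rho <= s ->
  0 < rho -> 0 < eps -> 0 < abar -> abar < (1 - eps) * rho / 2 -> 0 < bbar ->
  0 <= alpha <= abar -> 0 <= beta <= bbar -> 0 <= L <= lam ->
  del = delta_const eps abar bbar rho lam ->
  tau = ((1 + eps) * del + (1 + beta) * L) / (rho - alpha) ->
  p + (P xp + dotv xp (- gM (x + beta *: (x - xm)) - tau *: (x + alpha *: (x - xm) - x))
       + tau * bregman ps dps xp x)
  <= r + (P x + dotv x (- gM (x + beta *: (x - xm)) - tau *: (x + alpha *: (x - xm) - x))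
       + tau * bregman ps dps x x) ->
  (p + (P xp - M xp)) - (r + (P x - M x))
    <= - ((1 + eps) * del / 2) * sqn (xp - x) + (1 - eps) * del / 2 * sqn (x - xm).
Proof.
move=> dM DM Lip dps_ Dps sc rs r0 e0 a0 a1 b0 hal hbe hL hdel htau F.
have [tau0 del0 T1 T2] := @consts R _ _ _ _ _ _ _ _ _ _ r0 e0 a0 a1 b0 hal hbe hL hdel htau.
move: hal hbe hL => /andP[al0 al1] /andP[be0 be1] /andP[L0 L1].
set d := xp - x; set e := x - xm.
have B0 : bregman ps dps x x = 0 by rewrite /bregman [x - x]subrr dotv0r; lra.
have B1 : rho / 2 * sqn d <= bregman ps dps xp x.
  apply: le_trans (@breg_lb R n ps dps s xp x dps_ Dps sc).
  by apply: ler_wpM2r; [exact: sqnv_ge0 | lra].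
have Dsc := @descent R n M gM L x xp dM DM L0 Lip.
have hD : sqn (gM (x + beta *: e) - gM x) <= (L * beta) ^+ 2 * sqn e.
  have := @enorm_sq R n _ _ L L0 (Lip (x + beta *: e) x).
  rewrite addrAC subrr add0r /sqn dotvZl dotvZr exprMn expr2 => h.
  lra.
have CS1 := @key_cs R n d _ e _ (mulr_ge0 L0 be0) hD.
have CS2 : 2 * dotv d e <= sqn d + sqn e.
  have := @sqnv_ge0 R n (d - e); rewrite sqnvB; lra.
have CS2' := ler_wpM2l (mulr_ge0 tau0 al0) CS2.
have B1' := ler_wpM2l tau0 B1.
have sE : 0 <= sqn e := @sqnv_ge0 R n e.
have T2' := ler_wpM2r sE T2.
move: F; rewrite B0 -/e.
have -> : x + alpha *: e - x = alpha *: e by rewrite addrC addKr.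
rewrite dotvBr in CS1.
move=> F.
have E : dotv xp (- gM (x + beta *: e) - tau *: (alpha *: e)) -
         dotv x (- gM (x + beta *: e) - tau *: (alpha *: e)) =
         - dotv d (gM (x + beta *: e)) - tau * (alpha * dotv d e).
  by rewrite -dotvBl -/d dotvBr dotvNr !dotvZr.
rewrite -/d in Dsc.
have E2 : dotv (gM x) d = dotv d (gM x) by rewrite dotvC.
have T1' : tau * (rho - alpha) * sqn d = ((1 + eps) * del + (1 + beta) * L) * sqn d by rewrite T1.
lra.
Qed.
Lemma partial1 (R : realType) n1 n2 (h : 'rV[R]_n1 -> 'rV[R]_n2 -> R) g1 g2 :
  is_gradient2 h g1 g2 -> forall b u v,
  derivable (fun u => h u b) u v /\ 'D_v (fun u => h u b) u = dotv (g1 u b) v.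
Proof.
move=> G b u v.
set H := fun q : 'rV[R]_n1 * 'rV[R]_n2 => h q.1 q.2.
have E : (fun t : R => t^-1 *: (((fun u => h u b) \o shift u) (t *: v) - h u b)) =
         (fun t : R => t^-1 *: ((H \o shift (u, b)) (t *: (v, 0)) - H (u, b))).
  by apply/funext => t; rewrite /H /= scaler0 add0r.
have [dH DH] := G (u, b).
split; first by rewrite /derivable E; exact: diff_derivable.
by rewrite /derive E -/(derive H (u, b) (v, 0)) DH /= dotv0r addr0.
Qed.

Lemma partial2 (R : realType) n1 n2 (h : 'rV[R]_n1 -> 'rV[R]_n2 -> R) g1 g2 :
  is_gradient2 h g1 g2 -> forall a u v,
  derivable (fun u => h a u) u v /\ 'D_v (fun u => h a u) u = dotv (g2 a u) v.
Proof.
move=> G a u v.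
set H := fun q : 'rV[R]_n1 * 'rV[R]_n2 => h q.1 q.2.
have E : (fun t : R => t^-1 *: (((fun u => h a u) \o shift u) (t *: v) - h a u)) =
         (fun t : R => t^-1 *: ((H \o shift (a, u)) (t *: (0, v)) - H (a, u))).
  by apply/funext => t; rewrite /H /= scaler0 add0r.
have [dH DH] := G (a, u).
split; first by rewrite /derivable E; exact: diff_derivable.
by rewrite /derive E -/(derive H (a, u) (0, v)) DH /= dotv0r add0r.
Qed.

Lemma fin_step (R : realType) (t0 t1 : \bar R) (a b r : R) :
  t1 != -oo%E -> t0 = r%:E -> (t1 + a%:E <= t0 + b%:E)%E ->
  exists p, t1 = p%:E /\ p + a <= r + b.
Proof.
move=> h1 -> ; case: t1 h1 => [p| |] // _.
  by rewrite -!EFinD lee_fin => H; exists p.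
Qed.

Lemma delta_pos (R : realType) (eps abar bbar rho lam : R) :
  0 < rho -> 0 < eps -> 0 < abar -> abar < (1 - eps) * rho / 2 -> 0 < bbar -> 0 < lam ->
  0 < delta_const eps abar bbar rho lam.
Proof.
move=> r0 e0 a0 a1 b0 l0; rewrite /delta_const.
apply: mulr_gt0 => //; apply: divr_gt0; first by apply: addr_gt0 => //; exact: mulr_gt0.
lra.
Qed.
Local Close Scope classical_set_scope.
Local Open Scope ring_scope.
Theorem lemma1 (R : realType) (n1 n2 : nat)
  (theta1 : 'rV[R]_n1 -> \bar R) (theta2 : 'rV[R]_n2 -> \bar R)
  (hp hm : 'rV[R]_n1 -> 'rV[R]_n2 -> R)
  (gp1 gm1 : 'rV[R]_n1 -> 'rV[R]_n2 -> 'rV[R]_n1)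
  (gp2 gm2 : 'rV[R]_n1 -> 'rV[R]_n2 -> 'rV[R]_n2)
  (psi : nat -> 'rV[R]_n1 -> R) (dpsi : nat -> 'rV[R]_n1 -> 'rV[R]_n1)
  (phi : nat -> 'rV[R]_n2 -> R) (dphi : nat -> 'rV[R]_n2 -> 'rV[R]_n2)
  (rho1 rho2 : R)
  (L1m : 'rV[R]_n2 -> R) (L2m : 'rV[R]_n1 -> R)
  (lam1m lam1p lam2m lam2p : R)
  (eps abar1 abar2 bbar1 bbar2 : R)
  (alpha1 alpha2 beta1 beta2 tau1 tau2 : nat -> R)
  (x1 : nat -> 'rV[R]_n1) (x2 : nat -> 'rV[R]_n2) :
  (* n1, n2 >= 1 *)
  (0 < n1)%N -> (0 < n2)%N ->
  (* h^+, h^- continuously differentiable, with partial gradients gp*, gm* *)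
  C1_grad2 hp gp1 gp2 -> C1_grad2 hm gm1 gm2 ->
  (* kernels: C^1, strongly convex with modulus at least rho_i *)
  0 < rho1 -> 0 < rho2 ->
  (forall k, C1_grad (psi k) (dpsi k)) ->
  (forall k, C1_grad (phi k) (dphi k)) ->
  (forall k, exists s, rho1 <= s /\ strongly_convex s (psi k)) ->
  (forall k, exists s, rho2 <= s /\ strongly_convex s (phi k)) ->
  (* Assumption A1 *)
  proper_fun theta1 -> proper_fun theta2 ->
  lower_semicontinuous theta1 -> lower_semicontinuous theta2 ->
  (exists m : R, forall y1 y2, (m%:E <= Phi theta1 theta2 (fun a b => (hp a b - hm a b)%R) y1 y2)%E) ->
  (* Assumption A2 (i) *)
  (forall y2 a b, enorm (gm1 a y2 - gm1 b y2) <= L1m y2 * enorm (a - b)) ->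
  (forall y1 a b, enorm (gm2 y1 a - gm2 y1 b) <= L2m y1 * enorm (a - b)) ->
  (* Assumption A2 (ii) *)
  0 < lam1m -> 0 < lam1p -> 0 < lam2m -> 0 < lam2p ->
  (forall k, lam1m <= L1m (x2 k) <= lam1p) ->
  (forall k, lam2m <= L2m (x1 k) <= lam2p) ->
  (* Assumption A2 (iii): grad h Lipschitz on bounded sets *)
  (forall M : R, exists L : R, forall a1 a2 b1 b2,
     enorm a1 <= M -> enorm a2 <= M -> enorm b1 <= M -> enorm b2 <= M ->
     Num.sqrt (sqn ((gp1 a1 a2 - gm1 a1 a2) - (gp1 b1 b2 - gm1 b1 b2))
             + sqn ((gp2 a1 a2 - gm2 a1 a2) - (gp2 b1 b2 - gm2 b1 b2)))
       <= L * Num.sqrt (sqn (a1 - b1) + sqn (a2 - b2))) ->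
  (* Assumption A3 *)
  0 < eps ->
  0 < abar1 -> abar1 < (1 - eps) * rho1 / 2 ->
  0 < abar2 -> abar2 < (1 - eps) * rho2 / 2 ->
  0 < bbar1 -> 0 < bbar2 ->
  (forall k, 0 <= alpha1 k <= abar1) -> (forall k, 0 <= alpha2 k <= abar2) ->
  (forall k, 0 <= beta1 k <= bbar1) -> (forall k, 0 <= beta2 k <= bbar2) ->
  (forall k, tau1 k = ((1 + eps) * delta_const eps abar1 bbar1 rho1 lam1p
                       + (1 + beta1 k) * L1m (x2 k)) / (rho1 - alpha1 k)) ->
  (forall k, tau2 k = ((1 + eps) * delta_const eps abar2 bbar2 rho2 lam2p
                       + (1 + beta2 k) * L2m (x1 k.+1)) / (rho2 - alpha2 k)) ->
  (* the algorithm (x^{-1} := x^0, encoded by k.-1 with 0.-1 = 0) *)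
  (forall k,
     let y1 := x1 k + alpha1 k *: (x1 k - x1 k.-1) in
     let z1 := x1 k + beta1 k *: (x1 k - x1 k.-1) in
     let t1 := - gm1 z1 (x2 k) - tau1 k *: (y1 - x1 k) in
     is_argmin (fun u => (theta1 u + (hp u (x2 k) + dotv u t1
                          + tau1 k * bregman (psi k) (dpsi k) u (x1 k))%:E)%E)
               (x1 k.+1)) ->
  (forall k,
     let y2 := x2 k + alpha2 k *: (x2 k - x2 k.-1) in
     let z2 := x2 k + beta2 k *: (x2 k - x2 k.-1) in
     let t2 := - gm2 (x1 k.+1) z2 - tau2 k *: (y2 - x2 k) in
     is_argmin (fun u => (theta2 u + (hp (x1 k.+1) u + dotv u t2
                          + tau2 k * bregman (phi k) (dphi k) u (x2 k))%:E)%E)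
               (x2 k.+1)) ->
  let d1 := delta_const eps abar1 bbar1 rho1 lam1p in
  let d2 := delta_const eps abar2 bbar2 rho2 lam2p in
  let h := fun a b => hp a b - hm a b in
  let Th := fun k => Theta theta1 theta2 h d1 d2 (x1 k) (x2 k) (x1 k.-1) (x2 k.-1) in
  let delta := eps / 2 * Num.min d1 d2 in
  0 < delta /\
  (forall k, (Th k.+1 <= Th k)%E) /\
  (forall k, (Th k.+1 + (delta * (sqn (x1 k.+1 - x1 k) + sqn (x2 k.+1 - x2 k)
                         + sqn (x1 k - x1 k.-1) + sqn (x2 k - x2 k.-1)))%:E
              <= Th k)%E).
Proof.
move=> n1p n2p Hp Hm r1 r2 Cpsi Cphi SCpsi SCphi pr1 pr2 lsc1 lsc2 bnd Lip1 Lip2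
  l1m l1p l2m l2p HL1 HL2 HA3 e0 a10 a11 a20 a21 b10 b20 Hal1 Hal2 Hbe1 Hbe2 Ht1 Ht2
  Alg1 Alg2 d1 d2 h Th delta.
have d1p : 0 < d1 by apply: delta_pos.
have d2p : 0 < d2 by apply: delta_pos.
have dpos : 0 < delta.
  rewrite /delta; apply: mulr_gt0; first lra.
  by rewrite lt_min d1p d2p.
have main : forall k, (Th k.+1 + (delta * (sqn (x1 k.+1 - x1 k) + sqn (x2 k.+1 - x2 k)
                         + sqn (x1 k - x1 k.-1) + sqn (x2 k - x2 k.-1)))%:E <= Th k)%E.
  move=> k.
  have [pr1a _] := pr1; have [pr2a _] := pr2.
  have [f1|nf1] := boolP (theta1 (x1 k) \is a fin_num); last first.
    have -> : Th k = +oo%E.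
      move: nf1 (pr1a (x1 k)); rewrite /Th /Theta /Phi fin_numE negb_and !negbK.
      case: (theta1 (x1 k)) => [r| |] //= _ _.
      by rewrite addye // addye // addye.
    exact: leey.
  have [f2|nf2] := boolP (theta2 (x2 k) \is a fin_num); last first.
    have -> : Th k = +oo%E.
      move: nf2 (pr2a (x2 k)); rewrite /Th /Theta /Phi fin_numE negb_and !negbK.
      case: (theta2 (x2 k)) => [r| |] //= _ _.
      rewrite addey; first by rewrite addye.
      by rewrite -(fineK f1) -EFinD.
    exact: leey.
  set r1v := fine (theta1 (x1 k)); set r2v := fine (theta2 (x2 k)).
  have E1 : theta1 (x1 k) = r1v%:E by rewrite /r1v fineK.
  have E2 : theta2 (x2 k) = r2v%:E by rewrite /r2v fineK.
  have A1 := Alg1 k (x1 k); rewrite /= in A1.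
  have [p1v [F1 B1]] := @fin_step R _ _ _ _ _ (pr1a _) E1 A1.
  have A2 := Alg2 k (x2 k); rewrite /= in A2.
  have [p2v [F2 B2]] := @fin_step R _ _ _ _ _ (pr2a _) E2 A2.
  have [s1 [rs1 sc1]] := SCpsi k.
  have [s2 [rs2 sc2]] := SCphi k.
  have hL1 : 0 <= L1m (x2 k) <= lam1p.
    by have /andP[u v] := HL1 k; rewrite v andbT; apply: le_trans u; exact: ltW.
  have hL2 : 0 <= L2m (x1 k.+1) <= lam2p.
    by have /andP[u v] := HL2 k.+1; rewrite v andbT; apply: le_trans u; exact: ltW.
  have K1 := @block R n1 (fun u => hp u (x2 k)) (fun u => hm u (x2 k)) (fun u => gm1 u (x2 k))
    (psi k) (dpsi k) s1 rho1 (L1m (x2 k)) lam1p (tau1 k) (alpha1 k) (beta1 k) eps d1 abar1 bbar1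
    (x1 k) (x1 k.-1) (x1 k.+1) r1v p1v
    (fun u v => (@partial1 R n1 n2 hm gm1 gm2 (proj1 Hm) (x2 k) u v).1)
    (fun u v => (@partial1 R n1 n2 hm gm1 gm2 (proj1 Hm) (x2 k) u v).2)
    (Lip1 (x2 k))
    (fun v => diff_derivable (v:=v) (proj1 (proj1 (Cpsi k) (x1 k))))
    (proj2 (proj1 (Cpsi k) (x1 k))) sc1 rs1 r1 e0 a10 a11 b10 (Hal1 k) (Hbe1 k) hL1 erefl (Ht1 k) B1.
  have K2 := @block R n2 (fun u => hp (x1 k.+1) u) (fun u => hm (x1 k.+1) u) (fun u => gm2 (x1 k.+1) u)
    (phi k) (dphi k) s2 rho2 (L2m (x1 k.+1)) lam2p (tau2 k) (alpha2 k) (beta2 k) eps d2 abar2 bbar2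
    (x2 k) (x2 k.-1) (x2 k.+1) r2v p2v
    (fun u v => (@partial2 R n1 n2 hm gm1 gm2 (proj1 Hm) (x1 k.+1) u v).1)
    (fun u v => (@partial2 R n1 n2 hm gm1 gm2 (proj1 Hm) (x1 k.+1) u v).2)
    (Lip2 (x1 k.+1))
    (fun v => diff_derivable (v:=v) (proj1 (proj1 (Cphi k) (x2 k))))
    (proj2 (proj1 (Cphi k) (x2 k))) sc2 rs2 r2 e0 a20 a21 b20 (Hal2 k) (Hbe2 k) hL2 erefl (Ht2 k) B2.
  have m1 : delta <= eps / 2 * d1.
    by rewrite /delta ler_wpM2l ?ge_min ?lexx //; lra.
  have m2 : delta <= eps / 2 * d2.
    by rewrite /delta ler_wpM2l ?ge_min ?lexx ?orbT //; lra.
  have P1 := ler_wpM2r (@sqnv_ge0 R n1 (x1 k.+1 - x1 k)) m1.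
  have P2 := ler_wpM2r (@sqnv_ge0 R n2 (x2 k.+1 - x2 k)) m2.
  have P3 := ler_wpM2r (@sqnv_ge0 R n1 (x1 k - x1 k.-1)) m1.
  have P4 := ler_wpM2r (@sqnv_ge0 R n2 (x2 k - x2 k.-1)) m2.
  rewrite /Th /Theta /Phi /h /= E1 E2 F1 F2 -!EFinD lee_fin.
  lra.
split => //; split => // k.
apply: le_trans (main k).
apply: leeDl; rewrite lee_fin; apply: mulr_ge0; first exact: ltW.
by rewrite !addr_ge0 // sqnv_ge0.
Qed.
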